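(* If $\Omega$ is an I-thick domain in $\mathbb{R}^n$ and $\partial\Omega$ satisfies the ball condition, then $\Omega$ is interior regular.
   Context: A domain is a non-empty open set; proper if $\ne\mathbb{R}^n$. $\mathcal{Q}(S)$ denotes the open axis-parallel cubes contained in $S$, $l(Q)$ the edge length. A proper domain $\Omega$ is I-thick if for any $c_1,c_2,c_3,c_4>0$ and $j_0\in\mathbb{N}$ there are $c_5,c_6,c_7,c_8>0$ such that for every $j\ge j_0$ and every $Q^e\in\mathcal{Q}(\Omega^c)$ with $c_12^{-j}\le l(Q^e)\le c_22^{-j}$ and $c_32^{-j}\le\operatorname{dist}(Q^e,\partial\Omega)\le c_42^{-j}$ there is $Q^i\in\mathcal{Q}(\Omega)$ with $c_52^{-j}\le l(Q^i)\le c_62^{-j}$ and $c_72^{-j}\le\operatorname{dist}(Q^i,\partial\Omega)\le\operatorname{dist}(Q^e,Q^i)\le c_82^{-j}$. A non-empty closed $S\subset\mathbb{R}^n$ satisfies the ball condition if there is $\eta\in(0,1)$ such that for every ball $B(x,r)$ with $x\in S$ and $r\in(0,1)$ there is a ball $B(y,\eta r)\subset B(x,r)$ with $B(y,\eta r)\cap S=\emptyset$. A domain $\Omega$ is interior regular if there is $c>0$ such that $|\Omega\cap Q|\ge c|Q|$ for every cube $Q$ with side length at most $1$ centred at a point of $\partial\Omega$. *)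

(* Defs.v *)
From HB Require Import structures.
From mathcomp Require Import all_boot all_order all_algebra.
From mathcomp Require Import all_classical all_reals all_analysis.
Set Implicit Arguments. Unset Strict Implicit. Unset Printing Implicit Defensive.
Import Order.TTheory GRing.Theory Num.Theory numFieldNormedType.Exports.
Local Open Scope classical_set_scope.
Local Open Scope ring_scope.

(* Points of R^n are row vectors 'rV[R]_n; coordinate i of x is x 0 i. *)

Definition edist (R : realType) (n : nat) (x y : 'rV[R]_n) : R :=
  Num.sqrt (\sum_(i < n) (x 0 i - y 0 i) ^+ 2).

Definition eball (R : realType) (n : nat) (x : 'rV[R]_n) (r : R) : set 'rV[R]_n :=
  [set y | edist x y < r].

Definition setdist (R : realType) (n : nat) (A B : set 'rV[R]_n) : R :=
  inf [set edist x y | x in A & y in B].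

Definition bdry (R : realType) (n : nat) (A : set 'rV[R]_n) : set 'rV[R]_n :=
  closure A `\` A°.

Definition domain (R : realType) (n : nat) (O : set 'rV[R]_n) : Prop :=
  open O /\ O !=set0.
Definition proper_domain (R : realType) (n : nat) (O : set 'rV[R]_n) : Prop :=
  domain O /\ O != setT.

Definition cube (R : realType) (n : nat) (c : 'rV[R]_n) (l : R) : set 'rV[R]_n :=
  [set x | forall i : 'I_n, `|x 0 i - c 0 i| < l / 2].

(* (c, l) describes a cube of Q(S): l > 0 and the open cube lies in S. *)
Definition cube_in (R : realType) (n : nat) (S : set 'rV[R]_n) (c : 'rV[R]_n) (l : R) : Prop :=
  0 < l /\ cube c l `<=` S.

Definition I_thick (R : realType) (n : nat) (O : set 'rV[R]_n) : Prop :=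
  proper_domain O /\
  forall (c1 c2 c3 c4 : R) (j0 : nat), 0 < c1 -> 0 < c2 -> 0 < c3 -> 0 < c4 ->
  exists c5 c6 c7 c8 : R, [/\ 0 < c5, 0 < c6, 0 < c7 & 0 < c8] /\
    forall (j : nat) (ce : 'rV[R]_n) (le : R), (j0 <= j)%N ->
      cube_in (~` O) ce le ->
      c1 * (2 ^- j) <= le <= c2 * (2 ^- j) ->
      c3 * (2 ^- j) <= setdist (cube ce le) (bdry O) <= c4 * (2 ^- j) ->
      exists (ci : 'rV[R]_n) (li : R),
        [/\ cube_in O ci li,
            c5 * (2 ^- j) <= li <= c6 * (2 ^- j),
            c7 * (2 ^- j) <= setdist (cube ci li) (bdry O),
            setdist (cube ci li) (bdry O) <= setdist (cube ce le) (cube ci li) &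
            setdist (cube ce le) (cube ci li) <= c8 * (2 ^- j)].

Definition ball_condition (R : realType) (n : nat) (S : set 'rV[R]_n) : Prop :=
  closed S /\ S !=set0 /\
  exists eta : R, 0 < eta < 1 /\
    forall (x : 'rV[R]_n) (r : R), S x -> 0 < r < 1 ->
      exists y : 'rV[R]_n, eball y (eta * r) `<=` eball x r /\
                           eball y (eta * r) `&` S = set0.

Definition box (R : realType) (n : nat) (a b : 'rV[R]_n) : set 'rV[R]_n :=
  [set x | forall i : 'I_n, a 0 i < x 0 i < b 0 i].
Definition box_vol (R : realType) (n : nat) (a b : 'rV[R]_n) : R :=
  \prod_(i < n) (b 0 i - a 0 i).

Definition leb_outer (R : realType) (n : nat) (E : set 'rV[R]_n) : \bar R :=
  ereal_inf [set s : \bar R | exists a b : nat -> 'rV[R]_n,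
    [/\ forall k (i : 'I_n), a k 0 i <= b k 0 i,
        E `<=` \bigcup_k box (a k) (b k) &
        s = (\sum_(0 <= k <oo) (box_vol (a k) (b k))%:E)%E]].

(* Interior regular domain; |Q| = l^n for a cube of edge length l. *)
Definition interior_regular (R : realType) (n : nat) (O : set 'rV[R]_n) : Prop :=
  exists c : R, 0 < c /\
    forall (x : 'rV[R]_n) (l : R), bdry O x -> 0 < l <= 1 ->
      ((c * l ^+ n)%:E <= leb_outer (O `&` cube x l))%E.

(* Main.v *)
Require Import Defs.
From mathcomp Require Import all_boot all_order all_algebra.
From mathcomp Require Import all_classical all_reals all_analysis.
From mathcomp Require Import measurable_realfun ring lra.
Require Import Defs.
Set Implicit Arguments. Unset Strict Implicit. Unset Printing Implicit Defensive.
Import Order.TTheory GRing.Theory Num.Theory numFieldNormedType.Exports.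
Local Open Scope classical_set_scope.
Local Open Scope ring_scope.


Lemma one_dim (R : realType) (w a' b' : nat -> R) (a b t : R) :
  (forall k, 0 <= w k) -> (forall k, a' k <= b' k) -> a <= b -> 0 <= t ->
  (forall x, a < x < b ->
     (t%:E <= \sum_(0 <= k <oo) (w k * \1_(`]a' k, b' k[ : set R) x)%:E)%E) ->
  ((t * (b - a))%:E <= \sum_(0 <= k <oo) (w k * (b' k - a' k))%:E)%E.
Proof.
move=> w0 ab' ab t0 H.
pose F : R -> \bar R := fun x => (\sum_(0 <= k <oo) (w k * \1_(`]a' k, b' k[ : set R) x)%:E)%E.
have mF : measurable_fun [set: R] F.
  apply: (@ge0_emeasurable_sum _ _ _ _ _ xpredT).
    by move=> k x _ _; rewrite lee_fin mulr_ge0.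
  move=> k _; apply/measurable_EFinP; apply: measurable_funM.
    exact: measurable_cst.
  exact: measurable_indic.
have F0 x : (0 <= F x)%E.
  by apply: nneseries_ge0 => k _; rewrite lee_fin mulr_ge0.
have -> : (t * (b - a))%:E = (\int[lebesgue_measure]_(x in `]a, b[) (cst t%:E) x)%E.
  rewrite integral_cst //= lebesgue_measure_itv /=.
  case: ifPn; rewrite lte_fin => hab; first by rewrite EFinM -EFinB.
  have -> : b = a by apply/eqP; rewrite eq_le ab /= andbT leNgt.
  by rewrite subrr mulr0 mule0.
apply: (@le_trans _ _ (\int[lebesgue_measure]_(x in `]a, b[) F x)%E).
  apply: (@ge0_le_integral _ _ _ lebesgue_measure `]a, b[ (measurable_itv _) (cst t%:E) F).
  - by move=> x _; rewrite lee_fin.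
  - exact: measurable_cst.
  - exact: measurable_funS mF.
  - by move=> x /=; rewrite in_itv /= => /H.
apply: (@le_trans _ _ (\int[lebesgue_measure]_(x in setT) F x)%E).
  by apply: ge0_subset_integral.
rewrite /F integral_nneseries //; last first.
  - by move=> k x _; rewrite lee_fin mulr_ge0.
  - move=> k; apply/measurable_EFinP; apply: measurable_funM.
      exact: measurable_cst.
    exact: measurable_indic.
apply: lee_nneseries => k _.
  by move=> _; apply: integral_ge0 => x _; rewrite lee_fin mulr_ge0.
rewrite (_ : (fun x => _) = (fun x => (w k)%:E * (\1_(`]a' k, b' k[ : set R) x)%:E)%E); last first.
  by apply/funext => x; rewrite EFinM.
rewrite (@ge0_integralZl _ _ R lebesgue_measure setT measurableT) //; last first.
  by rewrite lee_fin.
  by apply/measurable_EFinP; exact: measurable_indic.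
rewrite integral_indic // setIT.
have := lebesgue_measure_itv `]a' k, b' k[ => /= ->.
case: ifPn; rewrite lte_fin => hab; first by rewrite EFinM -EFinB.
have -> : b' k = a' k by apply/eqP; rewrite eq_le ab' /= andbT leNgt.
by rewrite subrr mulr0 mule0.
Qed.


Definition rcons0 (R : realType) (n : nat) (x0 : R) (x : 'rV[R]_n) : 'rV[R]_n.+1 :=
  \row_(i < n.+1) (match unlift ord0 i with Some j => x 0 j | None => x0 end).
Definition rtl (R : realType) (n : nat) (v : 'rV[R]_n.+1) : 'rV[R]_n :=
  \row_(j < n) v 0 (lift ord0 j).

Lemma box_cons (R : realType) (n : nat) (a b : 'rV[R]_n.+1) x0 x :
  box a b (rcons0 x0 x) <-> (a 0 ord0 < x0 < b 0 ord0 /\ box (rtl a) (rtl b) x).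
Proof.
rewrite /box /rcons0 /rtl; split.
  move=> H; split.
    by have := H ord0; rewrite !mxE unlift_none.
  by move=> j; have := H (lift ord0 j); rewrite !mxE liftK.
move=> [H0 H] i; rewrite !mxE; case: unliftP => [j ->|->].
  by have := H j; rewrite !mxE.
by [].
Qed.

Lemma indic_box_cons (R : realType) (n : nat) (a b : 'rV[R]_n.+1) x0 x :
  \1_(box a b) (rcons0 x0 x) =
  \1_(`]a 0 ord0, b 0 ord0[ : set R) x0 * \1_(box (rtl a) (rtl b)) x :> R.
Proof.
rewrite !indicE.
have [h|h] := pselect (box a b (rcons0 x0 x)).
  move: (h) => /box_cons [h1 h2].
  have h1' : (`]a 0 ord0, b 0 ord0[%classic : set R) x0 by rewrite /= in_itv.
  by rewrite (mem_set h) (mem_set h2) (mem_set h1') mul1r.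
have [h1|h1] := pselect (a 0 ord0 < x0 < b 0 ord0).
  have [h2|h2] := pselect (box (rtl a) (rtl b) x).
    by exfalso; apply: h; apply/box_cons.
  by rewrite (memNset h) (memNset h2) mulr0.
have h1' : ~ (`]a 0 ord0, b 0 ord0[%classic : set R) x0.
  by rewrite /= in_itv /=; move=> /h1.
by rewrite (memNset h) (memNset h1') mul0r.
Qed.

Lemma box_vol_cons (R : realType) (n : nat) (a b : 'rV[R]_n.+1) :
  box_vol a b = (b 0 ord0 - a 0 ord0) * box_vol (rtl a) (rtl b).
Proof.
by rewrite /box_vol big_ord_recl; congr (_ * _); apply: eq_bigr => j _; rewrite !mxE.
Qed.

Lemma box_vol_ge0 (R : realType) (n : nat) (a b : 'rV[R]_n) :
  (forall i, a 0 i <= b 0 i) -> 0 <= box_vol a b.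
Proof. by move=> h; apply: prodr_ge0 => i _; rewrite subr_ge0. Qed.

Lemma boxes_lb (R : realType) (n : nat) (w : nat -> R) (a' b' : nat -> 'rV[R]_n)
  (a b : 'rV[R]_n) (t : R) :
  (forall k, 0 <= w k) -> (forall k i, a' k 0 i <= b' k 0 i) ->
  (forall i, a 0 i <= b 0 i) -> 0 <= t ->
  (forall x, box a b x ->
     (t%:E <= \sum_(0 <= k <oo) (w k * \1_(box (a' k) (b' k)) x)%:E)%E) ->
  ((t * box_vol a b)%:E <= \sum_(0 <= k <oo) (w k * box_vol (a' k) (b' k))%:E)%E.
Proof.
elim: n w a' b' a b t => [|n IH] w a' b' a b t w0 ab' ab t0 H.
  have := H 0 (fun i => match i with Ordinal _ h => False_ind _ (notF h) end).
  rewrite /box_vol big_ord0 mulr1.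
  rewrite (eq_eseriesr (g := fun k => (w k * \prod_(i < 0) (b' k 0 i - a' k 0 i))%:E)) //.
  move=> k _; rewrite big_ord0 indicE mem_set //.
  by move=> i; case: i.
pose vol' k := box_vol (rtl (a' k)) (rtl (b' k)).
have vol'0 k : 0 <= vol' k by apply: box_vol_ge0 => i; rewrite !mxE.
have v0 : 0 <= box_vol (rtl a) (rtl b) by apply: box_vol_ge0 => i; rewrite !mxE.
have := @one_dim R (fun k => w k * vol' k) (fun k => a' k 0 ord0) (fun k => b' k 0 ord0)
   (a 0 ord0) (b 0 ord0) (t * box_vol (rtl a) (rtl b)).
have e1 : ((t * box_vol (rtl a) (rtl b)) * (b 0 ord0 - a 0 ord0)) = t * box_vol a b.
  by rewrite box_vol_cons -mulrA (mulrC (box_vol _ _)).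
rewrite e1.
rewrite (eq_eseriesr (g := fun k => (w k * box_vol (a' k) (b' k))%:E)); last first.
  by move=> k _; rewrite box_vol_cons /vol' -mulrA (mulrC (box_vol _ _)).
apply.
- by move=> k; rewrite mulr_ge0.
- by move=> k; apply: ab'.
- exact: ab.
- by rewrite mulr_ge0.
move=> x0 hx0.
have := IH (fun k => w k * \1_(`]a' k 0 ord0, b' k 0 ord0[ : set R) x0)
  (fun k => rtl (a' k)) (fun k => rtl (b' k)) (rtl a) (rtl b) t.
rewrite (eq_eseriesr (g := fun k => (w k * vol' k * \1_(`]a' k 0 ord0, b' k 0 ord0[ : set R) x0)%:E)); last first.
  by move=> k _; rewrite /vol' mulrAC.
apply => //.
- by move=> k; rewrite mulr_ge0 // indicE ler0n.
- by move=> k i; rewrite !mxE.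
- by move=> i; rewrite !mxE.
move=> x hx.
have := H (rcons0 x0 x) (proj2 (box_cons _ _ _ _) (conj hx0 hx)).
rewrite (eq_eseriesr (g := fun k => (w k * \1_(`]a' k 0 ord0, b' k 0 ord0[ : set R) x0 * \1_(box (rtl (a' k)) (rtl (b' k))) x)%:E)) //.
by move=> k _; rewrite indic_box_cons mulrA.
Qed.


Lemma prod_const_ord (R : realType) (m : nat) (L : R) : \prod_(i < m) L = L ^+ m.
Proof.
elim: m => [|m IH]; first by rewrite big_ord0 expr0.
by rewrite big_ord_recr /= IH exprSr.
Qed.

Lemma cube_leb (R : realType) (n : nat) (c : 'rV[R]_n) (L : R) (E : set 'rV[R]_n) :
  0 < L -> cube c L `<=` E -> ((L ^+ n)%:E <= leb_outer E)%E.
Proof.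
move=> L0 cE; apply/ereal_infP => s [a' [b' [ab' cov ->]]].
pose a := \row_(i < n) (c 0 i - L / 2).
pose b := \row_(i < n) (c 0 i + L / 2).
have := @boxes_lb R n (fun _ => 1) a' b' a b 1.
have -> : box_vol a b = L ^+ n.
  rewrite /box_vol -(prod_const_ord n L); apply: eq_bigr => i _; rewrite !mxE.
  lra.
rewrite mul1r (eq_eseriesr (g := fun k => (box_vol (a' k) (b' k))%:E)); last first.
  by move=> k _; rewrite mul1r.
apply => //.
- by move=> i; rewrite !mxE; lra.
- move=> x hx.
  have : E x.
    apply: cE => i; have := hx i; rewrite !mxE => /andP[h1 h2].
    by rewrite ltr_norml; apply/andP; split; lra.
  move=> /cov [k _ hk].
  rewrite (nneseriesD1 (n := k)); [|by move=> j _; rewrite lee_fin mul1r indicE ler0n|by []].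
  apply: le_trans (leeDl _ _); last first.
    by apply: nneseries_ge0 => j _ _; rewrite lee_fin mul1r indicE ler0n.
  by rewrite indicE mem_set // mul1r.
Qed.



Lemma edist_ge0 (R : realType) (n : nat) (x y : 'rV[R]_n) : 0 <= edist x y.
Proof. exact: sqrtr_ge0. Qed.

Lemma edist_sq (R : realType) (n : nat) (x y : 'rV[R]_n) : edist x y ^+ 2 = \sum_(i < n) (x 0 i - y 0 i) ^+ 2.
Proof. by rewrite /edist sqr_sqrtr // sumr_ge0 // => i _; rewrite sqr_ge0. Qed.

Lemma edistC (R : realType) (n : nat) (x y : 'rV[R]_n) : edist x y = edist y x.
Proof. by rewrite /edist; congr Num.sqrt; apply: eq_bigr => i _; rewrite -sqrrN opprB. Qed.

Lemma edist0 (R : realType) (n : nat) (x : 'rV[R]_n) : edist x x = 0.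
Proof. by rewrite /edist big1 ?sqrtr0 // => i _; rewrite subrr expr0n. Qed.

Lemma sq_lt (R : realType) (u s : R) : 0 <= u -> 0 < s -> u ^+ 2 < s ^+ 2 -> u < s.
Proof. move=> u0 s0 h; rewrite ltNge; apply/negP => hs; nra. Qed.

Lemma sq_le (R : realType) (u s : R) : 0 <= u -> 0 <= s -> s ^+ 2 <= u ^+ 2 -> s <= u.
Proof. move=> u0 s0 h; rewrite leNgt; apply/negP => hs; nra. Qed.

Lemma coord_le_edist (R : realType) (n : nat) (x y : 'rV[R]_n) i : `|x 0 i - y 0 i| <= edist x y.
Proof.
apply: sq_le; rewrite ?edist_ge0 //.
rewrite edist_sq real_normK ?num_real // (bigD1 i) //= lerDl.
by apply: sumr_ge0 => j _; rewrite sqr_ge0.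
Qed.

Lemma sum_sq_le (R : realType) (n : nat) (x y : 'rV[R]_n) (h : R) : (forall i, `|x 0 i - y 0 i| <= h) ->
  edist x y ^+ 2 <= n%:R * h ^+ 2.
Proof.
move=> H; rewrite edist_sq.
have -> : n%:R * h ^+ 2 = \sum_(i < n) h ^+ 2 by rewrite sumr_const card_ord mulr_natl.
apply: ler_sum => i _; rewrite -real_normK ?num_real //.
have := H i; have := normr_ge0 (x 0 i - y 0 i); move: (`|_|) => u; nra.
Qed.

Lemma edist_tri2 (R : realType) (n : nat) (x y z : 'rV[R]_n) : edist x z ^+ 2 <= 2 * edist x y ^+ 2 + 2 * edist y z ^+ 2.
Proof.
rewrite !edist_sq !mulr_sumr -big_split /=; apply: ler_sum => i _.
move: (x 0 i) (y 0 i) (z 0 i) => a b c; have := sqr_ge0 (a - 2 * b + c); nra.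
Qed.

Lemma edist_lt_coords (R : realType) (n : nat) (x y : 'rV[R]_n) (h s : R) : (forall i, `|x 0 i - y 0 i| < h) ->
  0 < s -> n%:R * h ^+ 2 < s ^+ 2 -> edist x y < s.
Proof.
move=> H s0 hs; apply: sq_lt; rewrite ?edist_ge0 //.
apply: le_lt_trans hs; apply: sum_sq_le => i; exact/ltW.
Qed.

Lemma setdist_le (R : realType) (n : nat) (A B : set 'rV[R]_n) a b : A a -> B b -> setdist A B <= edist a b.
Proof.
move=> Aa Bb; apply: ge_inf; last by exists a => //; exists b.
by exists 0 => _ [u _ [v _ <-]]; apply: edist_ge0.
Qed.

Lemma setdist_ge (R : realType) (n : nat) (A B : set 'rV[R]_n) (m : R) : A !=set0 -> B !=set0 ->
  (forall a b, A a -> B b -> m <= edist a b) -> m <= setdist A B.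
Proof.
move=> [a Aa] [b Bb] H; apply: lb_le_inf; first by exists (edist a b); exists a => //; exists b.
by move=> _ [u Au [v Bv <-]]; apply: H.
Qed.

Lemma setdist_approx (R : realType) (n : nat) (A B : set 'rV[R]_n) (e : R) : A !=set0 -> B !=set0 -> 0 < e ->
  exists a b, [/\ A a, B b & edist a b < setdist A B + e].
Proof.
move=> [a Aa] [b Bb] e0.
have hi : has_inf [set edist x y | x in A & y in B].
  split; first by exists (edist a b); exists a => //; exists b.
  by exists 0 => _ [u _ [v _ <-]]; apply: edist_ge0.
have [d [u Au [v Bv <-]] hd] := inf_adherent e0 hi.
by exists u, v.
Qed.





Lemma cube_connected (R : realType) (n : nat) (c : 'rV[R]_n) (l : R) : 0 < l -> connected (cube c l).
Proof.
move=> l0.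
have -> : cube c l = \bigcup_(z in cube c l) ((fun t : R => c + t *: (z - c)) @` `[0, 1]).
  apply/seteqP; split => [z hz|w [z hz [t ht <-]]].
    exists z => //; exists 1; first by rewrite /= in_itv /= lexx ler01.
    by rewrite scale1r addrC subrK.
  move: ht; rewrite /= in_itv /= => /andP[t0 t1].
  move=> i; rewrite !mxE addrC addrK normrM (ger0_norm t0).
  have := hz i; have := normr_ge0 (z 0 i - c 0 i).
  move: (`|_|) => u; nra.
apply: bigcup_connected.
  exists c => z hz; exists 0; first by rewrite /= in_itv /= lexx ler01.
  by rewrite scale0r addr0.
move=> z hz; apply: connected_continuous_connected; first exact: segment_connected.
apply: continuous_subspaceT => t.
have h1 : {for t, continuous (fun _ : R => c)} by apply: cst_continuous.
have h2 : {for t, continuous (fun s : R => s *: (z - c))}.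
  by apply: continuousZr_tmp; apply: cvg_id.
exact: (continuousD h1 h2).
Qed.

Lemma conn_dich (R : realType) (n : nat) (A O : set 'rV[R]_n) : connected A -> open O ->
  A `&` bdry O = set0 -> (exists z, A z /\ O z) -> A `<=` O.
Proof.
move=> cA oO AB [z [Az Oz]].
have eq1 : A `&` O = A.
  apply: cA.
  - by exists z.
  - by exists O.
  exists (closure O); first exact: closed_closure.
  apply/seteqP; split => w [Aw hw]; split => //.
    exact: subset_closure.
  apply: contrapT => nO.
  have : (A `&` bdry O) w.
    split => //; split => // /interior_subset; exact: nO.
  by rewrite AB.
by rewrite -eq1 => w [].
Qed.




Lemma two_exp_gt (R : realType) (j : nat) : (j.+1)%:R <= (2 : R) ^+ j.
Proof. by rewrite -natrX ler_nat; apply: ltn_expl. Qed.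

Lemma exists_dyadic (R : realType) (u : R) : 0 < u -> u < 1 ->
  exists j : nat, (0 < j)%N /\ (u / 2 < 2 ^- j /\ 2 ^- j <= u).
Proof.
move=> u0 u1.
have ex : exists j : nat, (2 : R) ^- j <= u.
  exists (Num.Def.trunc (u^-1)).+1.
  have h1 := truncnS_gt (u^-1).
  have h2 := two_exp_gt R (Num.Def.trunc (u^-1)).+1.
  have p0 : 0 < (2 : R) ^+ (Num.Def.trunc (u^-1)).+1 by apply: exprn_gt0.
  move: h1 h2 p0.
  set T := Num.Def.trunc (u^-1); set E := (2 : R) ^+ T.+1 => h1 h2 p0.
  have hE : u^-1 <= E by move: h1 h2; rewrite -!natr1; lra.
  by rewrite -[X in _ <= X]invrK lef_pV2 ?posrE ?invr_gt0.
pose P := fun j : nat => (2 : R) ^- j <= u.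
have exP : exists j, (fun j => `[< P j >]) j by case: ex => j hj; exists j; apply/asboolP.
pose j := ex_minn exP.
have [jP jmin] : `[< P j >] /\ (forall k, `[< P k >] -> (j <= k)%N).
  by rewrite /j; case: ex_minnP.
move/asboolP: jP => jP.
exists j; split.
  rewrite lt0n; apply/negP => /eqP j0; move: jP; rewrite /P j0 expr0 invr1; lra.
split => //.
case: j jP jmin => [|k] jP jmin.
  by move: jP; rewrite /P expr0 invr1; lra.
have nk : ~ P k.
  by move=> Pk; have := jmin k (asboolT Pk); rewrite ltnn.
move: nk; rewrite /P exprS invfM => nk.
have : u < 2 ^- k by rewrite ltNge; apply/negP.
lra.
Qed.


Lemma absP (R : realType) (a b : R) : `|a| < b -> - b < a /\ a < b.
Proof. by rewrite ltr_norml => /andP. Qed.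

Theorem proposition5p10 (R : realType) (n : nat) (O : set 'rV[R]_n) :
  I_thick O -> ball_condition (bdry O) -> interior_regular O.
Proof.
move=> [[[oO _] _] thick] [_ [_ [eta [/andP[eta0 eta1] BC]]]].
pose N : R := n%:R + 1.
have n0 : 0 <= n%:R :> R by apply: ler0n.
have N1 : 1 <= N by rewrite /N; lra.
have N0 : 0 < N by lra.
have etaN : 0 < eta / N by apply: divr_gt0.
have eta2 : 0 < eta / 2 by apply: divr_gt0.
have [c5 [c6 [c7 [c8 [[c50 c60 c70 c80] TH]]]]] :=
  thick (eta / N) (eta / N) (eta / 2) 1 0%N etaN etaN eta2 ltr01.
pose K : R := 2 * (c6 + c8 + 3).
have K6 : 6 <= K by rewrite /K; lra.
have K0 : 0 < K by lra.
pose m : R := if eta / (2 * K * N) <= c5 / (2 * K) then eta / (2 * K * N) else c5 / (2 * K).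
have a0 : 0 < eta / (2 * K * N).
  apply: divr_gt0 => //; apply: mulr_gt0 => //; apply: mulr_gt0 => //; lra.
have b0 : 0 < c5 / (2 * K).
  apply: divr_gt0 => //; apply: mulr_gt0 => //; lra.
have m1 : m <= eta / (2 * K * N).
  by rewrite /m; case: (leP (eta / (2 * K * N)) (c5 / (2 * K))) => // /ltW.
have m2 : m <= c5 / (2 * K).
  by rewrite /m; case: (leP (eta / (2 * K * N)) (c5 / (2 * K))).
have m0 : 0 < m.
  by rewrite /m; case: (leP (eta / (2 * K * N)) (c5 / (2 * K))).
exists (m ^+ n); split; first exact: exprn_gt0.
move=> x l bx /andP[l0 l1].
have lK0 : 0 < l / K by apply: divr_gt0.
have lK1 : l / K < 1.
  rewrite ltr_pdivrMr //; lra.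
have [j [j0 [rlo rhi]]] := exists_dyadic lK0 lK1.
move: rlo rhi; set r : R := 2 ^- j => rlo rhi.
have r0 : 0 < r by lra.
have r1 : r < 1 by lra.
have r01 : 0 < r < 1 by rewrite r0 r1.
have [y [sub disj]] := BC x r bx r01.
pose s := eta * r.
pose h := s / (2 * N).
have s0 : 0 < s by apply: mulr_gt0.
have h0 : 0 < h by apply: divr_gt0 => //; lra.
have hN : h * (2 * N) = s by rewrite /h divfK //; lra.
have hr : h <= r.
  have : s <= r by rewrite /s; nra.
  nra.
have NE : N = n%:R + 1 by [].
have hh0 : 0 < h ^+ 2 by apply: exprn_gt0.
have sE : s ^+ 2 = 4 * N ^+ 2 * h ^+ 2 by rewrite -hN; ring.
have nh2 : n%:R * h ^+ 2 <= s ^+ 2 / 4.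
  have -> : s ^+ 2 / 4 = N ^+ 2 * h ^+ 2 by rewrite sE; field.
  rewrite ler_pM2r // NE; nra.
have nh1 : n%:R * h ^+ 2 < s ^+ 2.
  apply: le_lt_trans nh2 _; have : 0 < s ^+ 2 by apply: exprn_gt0.
  lra.
have yx i : `|x 0 i - y 0 i| < r.
  have : eball x r y by apply: sub; rewrite /eball /= edist0.
  by move=> /= hxy; apply: le_lt_trans (coord_le_edist _ _ _) hxy.
set Qe := cube y (2 * h).
have Qe_y : Qe y by move=> i; rewrite subrr normr0; lra.
have Qe_c q : Qe q -> forall i, `|q 0 i - y 0 i| < h.
  by move=> hq i; have := hq i; rewrite (_ : 2 * h / 2 = h) //; field.
have Qe_ball : Qe `<=` eball y s.
  move=> q hq; rewrite /eball /=.
  apply: (edist_lt_coords (h := h)) => // i.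
  by rewrite distrC; apply: Qe_c.
have Qe_nb : Qe `&` bdry O = set0.
  apply/seteqP; split => // q [hq bq].
  have : (eball y s `&` bdry O) q by split => //; apply: Qe_ball.
  by rewrite disj.
have Qe_x : Qe `<=` cube x l.
  move=> q hq i.
  have [a1 a2] := absP (Qe_c q hq i).
  have [b1 b2] := absP (yx i).
  rewrite ltr_norml; apply/andP; split.
    have : r <= l / K by [].
    rewrite ler_pdivlMr // => rl; nra.
  have : r <= l / K by [].
  rewrite ler_pdivlMr // => rl; nra.
have rl : r * K <= l by rewrite -ler_pdivlMr.
have rl2 : l < 2 * K * r.
  move: rlo; rewrite ltr_pdivrMr // ltr_pdivrMr //; lra.
have KN : (K != 0) && (N != 0) by rewrite (gt_eqF K0) (gt_eqF N0).
have N0' : N != 0 by rewrite (gt_eqF N0).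
have K0' : K != 0 by rewrite (gt_eqF K0).
have e2 : 2 * h = eta / N * r by rewrite /h /s; field.
have cc : connected Qe by apply: cube_connected; lra.
have [Oy|nOy] := pselect (O y).
  have QO : Qe `<=` O.
    by apply: (conn_dich cc oO Qe_nb); exists y.
  apply: le_trans (cube_leb (c := y) (L := 2 * h) _ _); last first.
  - by move=> q hq; split; [apply: QO | apply: Qe_x].
  - lra.
  have ml : m * l <= 2 * h.
    have e1 : eta / (2 * K * N) * l = eta / N * (l / K / 2) by field.
    apply: le_trans (ler_wpM2r (ltW l0) m1) _.
    by rewrite e1 e2; apply: ler_wpM2l (ltW etaN) _ _ (ltW rlo).
  rewrite lee_fin -exprMn; apply: lerXn2r => //; rewrite nnegrE.
    by apply: mulr_ge0; apply: ltW.
  lra.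
have QnO : Qe `<=` ~` O.
  move=> q hq Oq; apply: nOy.
  have := conn_dich cc oO Qe_nb (ex_intro _ q (conj hq Oq)).
  by apply.
have cin : cube_in (~` O) y (2 * h) by split; [lra | exact: QnO].
have c12 : eta / N * r <= 2 * h <= eta / N * r by rewrite e2 lexx.
have bdry_ne : bdry O !=set0 by exists x.
have Qe_ne : Qe !=set0 by exists y.
have hxy : edist x y < r.
  have : eball x r y by apply: sub; rewrite /eball /= edist0.
  by [].
have d34 : eta / 2 * r <= setdist Qe (bdry O) <= 1 * r.
  apply/andP; split; last first.
    apply: le_trans (setdist_le Qe_y bx) _.
    by rewrite mul1r edistC; apply: ltW.
  apply: setdist_ge => // q b hq hb.
  have ysb : s <= edist y b.
    rewrite leNgt; apply/negP => hyb.
    have : (eball y s `&` bdry O) b by split.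
    by rewrite disj.
  have t2 := edist_tri2 y q b.
  have yq : edist y q ^+ 2 <= n%:R * h ^+ 2.
    by apply: sum_sq_le => i; rewrite distrC; apply: ltW; apply: Qe_c.
  have eyb0 := edist_ge0 y b.
  have sA : s ^+ 2 <= edist y b ^+ 2 by nra.
  apply: sq_le; [exact: edist_ge0 | by apply: mulr_ge0; lra |].
  have -> : (eta / 2 * r) ^+ 2 = s ^+ 2 / 4 by rewrite /s; field.
  lra.
have [ci [li [[li0 QiO] /andP[li_lo li_hi] _ _ dQ]]] := TH j y (2 * h) (leq0n j) cin c12 d34.
move: li_lo li_hi dQ; rewrite -/r => li_lo li_hi dQ.
have Qi_ne : cube ci li !=set0.
  by exists ci => i; rewrite subrr normr0; lra.
have [q [p [hq hp hqp]]] := setdist_approx Qe_ne Qi_ne r0.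
have rK : r * K = 2 * (c6 * r) + 2 * (c8 * r) + 6 * r by rewrite /K; ring.
have Qi_x : cube ci li `<=` cube x l.
  move=> z hz i.
  have [a1 a2] := absP (hz i).
  have [b1 b2] := absP (hp i).
  have := coord_le_edist q p i => hqpi.
  have [c1' c2'] : - (c8 * r + r) < q 0 i - p 0 i /\ q 0 i - p 0 i < c8 * r + r.
    apply: absP; apply: le_lt_trans hqpi _; lra.
  have [d1 d2] := absP (Qe_c q hq i).
  have [e1 e2'] := absP (yx i).
  rewrite ltr_norml; apply/andP; split; lra.
apply: le_trans (cube_leb (c := ci) (L := li) li0 _); last first.
  by move=> z hz; split; [apply: QiO | apply: Qi_x].
have ml : m * l <= li.
  have e1 : c5 / (2 * K) * l = c5 * (l / K / 2) by field.
  apply: le_trans (ler_wpM2r (ltW l0) m2) _.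
  rewrite e1; apply: le_trans li_lo.
  by apply: ler_wpM2l (ltW c50) _ _ (ltW rlo).
rewrite lee_fin -exprMn; apply: lerXn2r => //; rewrite nnegrE.
  by apply: mulr_ge0; apply: ltW.
lra.
Qed.
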